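(* Let $n\in\mathbb{N}$. Then: (i) the number of distinct nilpotent semigroups of degree $3$ on the set $\{1,2,\ldots,n\}$ (i.e. the number of associative multiplications on this set making it a nilpotent semigroup of degree $3$) is \[ \sum_{m=2}^{a(n)}\binom{n}{m}\, m\sum_{i=0}^{m-1}(-1)^i\binom{m-1}{i}(m-i)^{\left((n-m)^2\right)},\qquad a(n)=\left\lfloor n+\tfrac12-\sqrt{n-\tfrac34}\,\right\rfloor; \] (ii) the number of distinct commutative nilpotent semigroups of degree $3$ on $\{1,2,\ldots,n\}$ is \[ \sum_{m=2}^{c(n)}\binom{n}{m}\, m\sum_{i=0}^{m-1}(-1)^i\binom{m-1}{i}(m-i)^{(n-m)(n-m+1)/2},\qquad c(n)=\left\lfloor n+\tfrac32-\sqrt{2n+\tfrac14}\,\right\rfloor. \] (Empty sums are $0$.)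
   Context: For a semigroup $S$ and $r\in\mathbb{N}$ let $S^r=\{s_1s_2\cdots s_r : s_1,\ldots,s_r\in S\}$. A semigroup $S$ is nilpotent if $|S^r|=1$ for some $r\in\mathbb{N}$, and it has (nilpotency) degree $r$ if $r$ is the least such number. Thus $S$ is nilpotent of degree $3$ iff $S$ has a zero, every product of three elements equals the zero, and some product of two elements is non-zero. Counting ''on a set'' means counting distinct multiplication tables (up to equality). *)

(* Defs.v *)
From Stdlib Require Import Reals.
From Stdlib Require Import ZArith.

(* a(n) = floor(n + 1/2 - sqrt(n - 3/4)), truncated to nat (negative values give 0,
   which makes the sum from m = 2 empty, as intended). *)
Definition a_bound (n : nat) : nat :=
  Z.to_nat (Int_part (INR n + / 2 - sqrt (INR n - 3 / 4))%R).

Definition c_bound (n : nat) : nat :=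
  Z.to_nat (Int_part (INR n + 3 / 2 - sqrt (2 * INR n + / 4))%R).

From HB Require Import structures.
From mathcomp Require Import all_boot all_order all_algebra.
Set Implicit Arguments. Unset Strict Implicit. Unset Printing Implicit Defensive.

(* A multiplication table on the set {1,...,n}, represented as 'I_n. *)
Definition table (n : nat) := {ffun 'I_n * 'I_n -> 'I_n}.

Definition is_assoc n (f : table n) : bool :=
  [forall x, forall y, forall z, f (f (x, y), z) == f (x, f (y, z))].

Definition is_comm n (f : table n) : bool :=
  [forall x, forall y, f (x, y) == f (y, x)].

(* S^r = set of products s_1 ... s_r (left-bracketed; for associative f this is
   the set of all products of r elements).  S^1 = S; S^0 is set to S (unused). *)
Fixpoint Spow n (f : table n) (r : nat) : {set 'I_n} :=
  match r with
  | 0 => setT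
  | 1 => setT
  | r'.+1 => [set f (x, y) | x in Spow f r', y in setT]
  end.

Definition nil_degree n (f : table n) (r : nat) : bool :=
  [&& is_assoc f, 0 < r, #|Spow f r| == 1
    & [forall k : 'I_r, (0 < k) ==> (#|Spow f k| != 1)]].

(* Main.v *)
From Stdlib Require Import Reals Lra Lia ZArith.
Require Import Defs.
From HB Require Import structures.
From mathcomp Require Import all_boot all_order all_algebra.
From mathcomp Require Import ring zify.
Set Implicit Arguments. Unset Strict Implicit. Unset Printing Implicit Defensive.
Import GRing.Theory Num.Theory.
Section Bounds.
Local Open Scope R_scope.

Lemma floor_ge (x : R) (m : nat) : INR m <= x -> (m <= Z.to_nat (Int_part x))%N.
Proof.
intros H; apply/leP; unfold Int_part.
destruct (archimed x) as [H1 _].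
assert (Z.lt (Z.of_nat m) (up x)).
{ apply lt_IZR; rewrite <- INR_IZR_INZ; lra. }
lia.
Qed.

Lemma sqrt_le_y (x y : R) : 0 <= y -> x <= y * y -> sqrt x <= y.
Proof.
intros Hy Hx; destruct (Rle_or_lt x 0) as [H|H].
- rewrite sqrt_neg_0; lra.
- rewrite <- (sqrt_square y Hy); apply sqrt_le_1_alt; exact Hx.
Qed.

Lemma a_ge (n m : nat) : (m <= n)%N -> (m.-1 <= (n - m) ^ 2)%N -> (m <= a_bound n)%N.
Proof.
move=> mn h; unfold a_bound; apply floor_ge.
rewrite -mulnn in h.
set k := (n - m)%N in h.
have hk : n = (m + k)%N by rewrite /k; lia.
have hn : (n <= k * k + k + 1)%N by lia.
have hn' : (n <= k * k + k + 1)%coq_nat by apply/leP.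
have hr : INR n <= INR k * INR k + INR k + 1.
  rewrite <- mult_INR, <- plus_INR, <- S_INR. apply le_INR. rewrite <- Nat.add_1_r. exact hn'.
have hs : sqrt (INR n - 3 / 4) <= INR k + / 2.
  apply sqrt_le_y; [pose proof (pos_INR k); lra | nra].
have hk' : INR n = INR m + INR k by rewrite hk -plus_INR.
lra.
Qed.

Lemma c_ge (n m : nat) : (m <= n)%N -> (m.-1 <= (n - m) * (n - m + 1) %/ 2)%N -> (m <= c_bound n)%N.
Proof.
move=> mn h; unfold c_bound; apply floor_ge.
set k := (n - m)%N in h.
have hk : n = (m + k)%N by rewrite /k; lia.
have h2 : (2 * m.-1 <= k * (k + 1))%N.
  apply: leq_trans (leq_mul (leqnn 2) h) _; rewrite mulnC; exact: leq_trunc_div.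
have hn : (2 * n <= k * k + 3 * k + 2)%N by lia.
have hn' : (2 * n <= k * k + 3 * k + 2)%coq_nat by apply/leP.
have hr : 2 * INR n <= INR k * INR k + 3 * INR k + 2.
  replace 2 with (INR 2) by (simpl; lra). replace 3 with (INR 3) by (simpl; lra).
  rewrite <- !mult_INR, <- !plus_INR. apply le_INR; exact hn'.
have hs : sqrt (2 * INR n + / 4) <= INR k + 3 / 2.
  apply sqrt_le_y; [pose proof (pos_INR k); lra | nra].
have hk' : INR n = INR m + INR k by rewrite hk -plus_INR.
lra.
Qed.
End Bounds.
Section Cov.
Variables (D T : finType) (z : T).

Definition famP (E : {set D}) (A : {set T}) (f : {ffun D -> T}) : bool :=
  [forall d, if d \in E then f d \in A else f d == z].

Definition Ncov (E : {set D}) (A C : {set T}) := #|[set f | famP E A f && (C \subset f @: E)]|.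

Lemma Ncov0 (E : {set D}) (A : {set T}) : Ncov E A set0 = #|A| ^ #|E|.
Proof.
rewrite /Ncov -(card_pffun_on z); apply: eq_card => f.
rewrite inE sub0set andbT; apply/forallP/familyP => H d; have := H d;
  by rewrite /= ?inE; case: (d \in E) => //=; rewrite inE.
Qed.

Lemma Ncov_step (E : {set D}) (A C : {set T}) c : c \in C -> C \subset A ->
  Ncov E A C + Ncov E (A :\ c) (C :\ c) = Ncov E A (C :\ c).
Proof.
move=> cC CA; rewrite /Ncov.
set X := [set f | famP E A f && (C :\ c \subset f @: E)].
rewrite -(cardsID [set f : {ffun D -> T} | c \in f @: E] X); congr (_ + _); apply: eq_card => f;
  rewrite !inE.
- rewrite -andbA; congr (_ && _).
  by rewrite -{1}(setD1K cC) subUset sub1set andbC.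
- rewrite [RHS]andbA; congr (_ && _).
  rewrite /famP; apply/idP/andP => [H1|[H3 H1]].
  + split.
      apply/negP => /imsetP[d dE fdc]; move/forallP: H1 => /(_ d); rewrite dE.
      by rewrite -fdc !inE eqxx.
    apply/forallP => d; move/forallP: H1 => /(_ d).
    by case: ifP => // dE; rewrite !inE => /andP[].
  + apply/forallP => d; move/forallP: H1 => /(_ d).
    case: ifP => // dE; rewrite !inE => ->; rewrite andbT.
    by apply: contraNneq H3 => <-; apply: imset_f.
Qed.
Local Open Scope ring_scope.
Definition Ssum (e a k : nat) : int :=
  \sum_(0 <= i < k.+1) (-1) ^+ i * ('C(k, i))%:Z * (((a - i) ^ e)%N)%:Z.
Lemma Ssum_S e a k : Ssum e a k.+1 = Ssum e a k - Ssum e a.-1 k.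
Proof.
rewrite /Ssum big_nat_recl //.
have -> : \sum_(0 <= i < k.+1) (-1) ^+ i.+1 * ('C(k.+1, i.+1))%:Z * (((a - i.+1) ^ e)%N)%:Z
  = \sum_(0 <= i < k.+1) (-1) ^+ i.+1 * ('C(k, i.+1))%:Z * (((a - i.+1) ^ e)%N)%:Z
    - \sum_(0 <= i < k.+1) (-1) ^+ i * ('C(k, i))%:Z * (((a.-1 - i) ^ e)%N)%:Z.
  rewrite -sumrB; apply: eq_bigr => i _.
  by rewrite binS PoszD -subn1 -subnDA add1n exprS; ring.
rewrite addrA; congr (_ - _).
rewrite bin0 -(bin0 k) -(big_nat_recl k.+1 0 (fun i => (-1) ^+ i * ('C(k, i))%:Z * (((a - i) ^ e)%N)%:Z)) //.
by rewrite big_nat_recr //= bin_small // mulr0 mul0r addr0.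
Qed.

Lemma Ncov_formula (E : {set D}) k : forall (A C : {set T}),
  #|C| = k -> C \subset A -> (Ncov E A C)%:Z = Ssum #|E| #|A| k.
Proof.
elim: k => [|k IH] A C hC CA.
  rewrite (cards0_eq hC) Ncov0 /Ssum big_nat1 expr0 bin0 subn0 mul1r.
  by rewrite mul1r.
have [c cC] : exists c, c \in C by apply/set0Pn; rewrite -card_gt0 hC.
have cA : c \in A by apply: (subsetP CA).
have hC' : #|C :\ c| = k by move: hC; rewrite (cardsD1 c) cC add1n => -[].
have := Ncov_step E cC CA => /(congr1 Posz); rewrite PoszD => H.
have -> : (Ncov E A C)%:Z = (Ncov E A (C :\ c))%:Z - (Ncov E (A :\ c) (C :\ c))%:Z.
  by rewrite -H addrK.
rewrite IH //; last by apply: subset_trans CA; apply: subD1set.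
rewrite IH //; last by apply: setSD.
by rewrite Ssum_S [#|A|](cardsD1 c) cA add1n.
Qed.
End Cov.

Lemma Ncov_small (D T : finType) (z : T) (E : {set D}) (A C : {set T}) :
  #|E| < #|C| -> Ncov z E A C = 0%N.
Proof.
move=> EC; apply: eq_card0 => f; rewrite inE; apply/negP => /andP[_ H].
have := leq_trans (subset_leq_card H) (leq_imset_card f E).
by rewrite leqNgt EC.
Qed.

Lemma Ssum_zero e m : e < m -> Ssum e m.+1 m = 0.
Proof.
move=> em.
have := @Ncov_formula 'I_e 'I_m.+1 ord0 setT m setT [set~ ord0].
rewrite cardsC1 card_ord => /(_ erefl (subsetT _)).
rewrite !cardsT !card_ord => <-.
by rewrite Ncov_small // cardsT cardsC1 !card_ord.
Qed.

Definition Tsum (e : nat -> nat) (m : nat) : int :=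
  \sum_(0 <= i < m) (-1) ^+ i * ('C(m.-1, i))%:Z * (((m - i) ^ (e m))%N)%:Z.

Lemma Tsum_Ssum e m : 0 < m -> Tsum e m = Ssum (e m) m m.-1.
Proof. by case: m. Qed.

Lemma Tsum_zero e m : 1 < m -> e m < m.-1 -> Tsum e m = 0.
Proof. by case: m => // m _ em; rewrite Tsum_Ssum // Ssum_zero. Qed.
Section Main.
Variable n : nat.
Local Notation I := 'I_n.
Definition EA (A : {set I}) : {set I * I} := setX (~: A) (~: A).

Lemma Spow2E (f : table n) : Spow f 2 = [set f (x, y) | x in [set: I], y in [set: I]].
Proof. by []. Qed.
Lemma Spow3E (f : table n) : Spow f 3 = [set f (x, y) | x in Spow f 2, y in [set: I]].
Proof. by []. Qed.

Lemma char3 (f : table n) (A : {set I}) (z : I) :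
  [&& nil_degree f 3, Spow f 2 == A & Spow f 3 == [set z]] =
  [&& z \in A, 1 < #|A|, famP z (EA A) A f & A :\ z \subset f @: EA A].
Proof.
apply/idP/idP.
- case/and3P => /and4P[/forallP asf _ _ hk] /eqP S2 /eqP S3.
  have as' : forall x y w, f (f (x, y), w) = f (x, f (y, w)).
    by move=> x y w; move: (asf x) => /forallP/(_ y)/forallP/(_ w)/eqP.
  have S32 : forall x y w, f (f (x, y), w) = z.
    move=> x y w; apply/set1P; rewrite -S3 Spow3E; apply: imset2_f => //.
    by rewrite Spow2E; apply: imset2_f.
  have zA : z \in A.
    have : z \in Spow f 3 by rewrite S3 set11.
    by rewrite Spow3E -S2 => /imset2P[u y uS _ ->]; move: uS;
      rewrite Spow2E => /imset2P[a b _ _ ->]; rewrite as'; apply: imset2_f.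
  have A1 : #|A| != 1.
    by move/forallP: hk => /(_ (@Ordinal 3 2 isT)) /=; rewrite -S2.
  have K : forall x y, (x \in A) || (y \in A) -> f (x, y) = z.
    move=> x y /orP[]; rewrite -S2 Spow2E => /imset2P[a b _ _ ->].
      by apply: S32.
    by rewrite -as'; apply: S32.
  have fA : forall x y, f (x, y) \in A.
    by move=> x y; rewrite -S2 Spow2E; apply: imset2_f.
  apply/and4P; split => //.
  + by rewrite ltn_neqAle eq_sym A1 card_gt0; apply/set0Pn; exists z.
  + apply/forallP => -[x y]; rewrite !inE /=; case: ifP => [_|]; first exact: fA.
    by move=> H; rewrite K //; move: H; case: (x \in A); case: (y \in A).
  + apply/subsetP => w; rewrite in_setD1 => /andP[wz]; rewrite -{1}S2 Spow2E.
    case/imset2P => x y _ _ wE; rewrite wE in wz *; apply: imset_f; rewrite !inE.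
    rewrite /=; case xA: (x \in A); first by rewrite K ?xA ?eqxx in wz.
    case yA: (y \in A) => //; by rewrite K ?yA ?orbT ?eqxx in wz.
- case/and4P => zA A1 /forallP fam cov.
  have K : forall x y, (x \in A) || (y \in A) -> f (x, y) = z.
    move=> x y H; move: (fam (x, y)); rewrite !inE /=.
    by case: (x \in A) H; case: (y \in A) => //= _ /eqP.
  have fA : forall x y, f (x, y) \in A.
    move=> x y; move: (fam (x, y)); case: ifP => // _ /eqP ->; exact: zA.
  have S2 : Spow f 2 = A.
    apply/setP => w; rewrite Spow2E; apply/imset2P/idP => [[x y _ _ ->]|wA].
      exact: fA.
    case: (eqVneq w z) => [->|wz].
      by exists z z => //; rewrite K // zA.
    have : w \in A :\ z by rewrite !inE wz.
    by move/(subsetP cov) => /imsetP[[x y] _ ->]; exists x y.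
  have S3 : Spow f 3 = [set z].
    apply/setP => w; rewrite Spow3E S2 inE; apply/imset2P/eqP => [[x y xA _ ->]|->].
      by rewrite K // xA.
    by exists z z => //; rewrite K // zA.
  apply/and3P; split; rewrite ?S2 ?S3 //.
  apply/and4P; split => //.
  + apply/forallP => x; apply/forallP => y; apply/forallP => w.
    by rewrite K ?fA // [f (x, f _)]K // fA orbT.
  + by rewrite S3 cards1.
  + apply/forallP => -[[|[|[|k]]] hk] //=.
      rewrite cardsT card_ord; apply: contraTneq A1 => n1.
      by rewrite -leqNgt; apply: leq_trans (max_card A) _; rewrite card_ord n1.
    by rewrite -Spow2E S2 neq_ltn A1 orbT.
Qed.

Lemma card_setP (T : finType) (P : {set T}) (Q : pred T) :
  #|[set x in P | Q x]| = \sum_(x in P) (Q x : nat).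
Proof.
rewrite -sum1_card big_mkcond [RHS]big_mkcond; apply: eq_bigr => x _.
by rewrite !inE; case: (x \in P); case: (Q x).
Qed.

Lemma sum_one_point (J : finType) (j0 : J) (F : J -> nat) :
  (forall j, j != j0 -> F j = 0) -> \sum_j F j = F j0.
Proof. by move=> H; rewrite (bigD1 j0) //= big1 ?addn0. Qed.

Lemma partition_count (P : {set table n}) :
  (forall f, f \in P -> #|Spow f 3| = 1) ->
  #|P| = \sum_(A : {set I}) \sum_(z : I)
           #|[set f in P | (Spow f 2 == A) && (Spow f 3 == [set z])]|.
Proof.
move=> H1.
under eq_bigr do under eq_bigr do rewrite card_setP.
under eq_bigr do rewrite exchange_big.
rewrite exchange_big -sum1_card; apply: eq_bigr => f fP; symmetry.
rewrite (@sum_one_point _ (Spow f 2)); last first.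
  by move=> A nA; apply: big1 => z _; rewrite eq_sym (negbTE nA).
have [z0 S3] := cards1P (introT eqP (H1 f fP)).
rewrite (@sum_one_point _ z0); first by rewrite eqxx S3 eqxx.
move=> z zz0; rewrite eqxx S3 /=; apply/eqP; rewrite eqb0.
by apply: contra zz0 => /eqP/set1_inj ->.
Qed.

Lemma Posz_sum (J : finType) (F : J -> nat) : Posz (\sum_j F j)%N = (\sum_j Posz (F j))%R.
Proof. by apply: (big_morph Posz PoszD). Qed.

Lemma sum_by_card (G : nat -> int) :
  (\sum_(A : {set I}) G #|A| = \sum_(m < n.+1) G m *+ 'C(n, m))%R.
Proof.
have -> : (\sum_(A : {set I}) G #|A| =
          \sum_(A : {set I}) \sum_(m < n.+1) (if #|A| == m then G m else 0))%R.
  apply: eq_bigr => A _.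
  have hA : #|A| < n.+1 by rewrite ltnS; apply: leq_trans (max_card A) _; rewrite card_ord.
  rewrite (bigD1 (Ordinal hA)) //= eqxx big1 ?addr0 // => m.
  by rewrite -val_eqE /= eq_sym => /negbTE ->.
rewrite exchange_big; apply: eq_bigr => m _.
rewrite -big_mkcond sumr_const; congr (_ *+ _)%R.
have := card_draws I m; rewrite card_ord => <-.
by apply: eq_card => A; rewrite inE.
Qed.

Lemma sum_drop2 (F : nat -> int) p :
  (\sum_(0 <= m < p) (if (1 < m)%N then F m else 0) = \sum_(2 <= m < p) F m)%R.
Proof.
case: (leqP 2 p) => hp.
  rewrite (big_cat_nat _ (n := 2)) //= big_nat_recl // big_nat1 /= !add0r.
  by apply: eq_big_nat => m /andP[hm _]; rewrite hm.
rewrite [RHS]big_geq ?(ltnW hp) //; apply: big1_seq => m; rewrite mem_index_iota.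
case/andP => _ mp; have -> : (1 < m)%N = false by apply/negbTE; rewrite -leqNgt -ltnS; exact: (leq_trans mp (ltnW hp)).
by [].
Qed.

Lemma assemble (P : {set table n}) (e : nat -> nat) :
  (forall f, f \in P -> #|Spow f 3| = 1%N) ->
  (forall A z, Posz #|[set f in P | (Spow f 2 == A) && (Spow f 3 == [set z])]|
      = if (z \in A) && (1 < #|A|) then Tsum e #|A| else 0%R) ->
  Posz #|P| = (\sum_(2 <= m < n.+1) Posz ('C(n, m) * m) * Tsum e m)%R.
Proof.
move=> H1 H2; rewrite (partition_count H1) Posz_sum.
under eq_bigr do rewrite Posz_sum.
under eq_bigr do under eq_bigr do rewrite H2.
have -> : (\sum_(A : {set I}) \sum_(z : I)
   (if (z \in A) && (1 < #|A|)%N then Tsum e #|A| else 0) =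
   \sum_(A : {set I}) (fun m => if (1 < m)%N then (Posz m * Tsum e m) else 0) #|A|)%R.
  apply: eq_bigr => A _ /=; case: (1 < #|A|); last first.
    by apply: big1 => z _; rewrite andbF.
  under eq_bigr do rewrite andbT.
  by rewrite -big_mkcond sumr_const -mulr_natl natz.
rewrite (sum_by_card (fun m => if (1 < m)%N then (Posz m * Tsum e m)%R else 0%R)) -sum_drop2 big_mkord; apply: eq_bigr => m _.
by case: ifP => _; rewrite ?mul0rn // -mulr_natl natz PoszM; ring.
Qed.

Definition EA' (A : {set I}) : {set I * I} := [set p in EA A | (p.1 <= p.2)%N].

Lemma card_EA (A : {set I}) : #|EA A| = ((n - #|A|) ^ 2)%N.
Proof.
have hC : #|~: A| = (n - #|A|)%N by have := cardsC A; rewrite card_ord; lia.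
by rewrite /EA cardsX hC mulnn.
Qed.

Lemma card_EA' (A : {set I}) : #|EA' A| = ((n - #|A|) * (n - #|A| + 1) %/ 2)%N.
Proof.
set k := (n - #|A|)%N.
have hk : #|~: A| = k by rewrite /k; have := cardsC A; rewrite card_ord; lia.
set E := EA A.
set L := [set p in E | (p.1 < p.2)%N].
set G := [set p in E | (p.2 < p.1)%N].
set Dg := [set p in E | (p.1 == p.2 :> nat)].
have h1 : (#|EA' A| + #|G| = #|E|)%N.
  rewrite -(cardsID [set p : I * I | (p.1 <= p.2)%N] E); congr (_ + _)%N.
    by apply: eq_card => p; rewrite !inE.
  by apply: eq_card => p; rewrite !inE -ltnNge andbC.
have h2 : (#|L| + #|Dg| = #|EA' A|)%N.
  rewrite -(cardsID [set p : I * I | (p.1 < p.2)%N] (EA' A)); congr (_ + _)%N.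
    apply: eq_card => p; rewrite !inE.
    by case h: (p.1 < p.2)%N; rewrite ?andbF // (ltnW h) !andbT.
  apply: eq_card => p; rewrite !inE eqn_leq [(p.2 <= p.1)%N]leqNgt.
  by case: (p.1 < p.2)%N; case: (p.1 <= p.2)%N; case: (p.1 \notin A); case: (p.2 \notin A).
have h3 : #|G| = #|L|.
  have -> : G = [set (p.2, p.1) | p in L].
    apply/setP => -[x y]; rewrite !inE /=; apply/idP/imsetP => [H|[[u v] H [-> ->]]].
      by exists (y, x) => //; move: H; rewrite !inE /=; case: (x \notin A); case: (y \notin A).
    by move: H; rewrite !inE /=; case: (u \notin A); case: (v \notin A).
  by rewrite card_imset // => -[a b] [c d] [-> ->].
have h4 : #|Dg| = k.
  rewrite -hk -(card_imset (~: A) (f := fun x : I => (x, x))); last by move=> x y [].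
  apply: eq_card => -[x y]; rewrite !inE /=; apply/idP/imsetP => [|[u uA [-> ->]]].
    by case/andP=> /andP[xA _] /eqP/val_inj <-; exists x; rewrite ?inE.
  by move: uA; rewrite inE => ->; rewrite eqxx.
have hE : #|E| = (k * k)%N by rewrite card_EA mulnn.
have hs : (2 * #|EA' A| = k * (k + 1))%N.
  rewrite mulnDr muln1 -hE -h1 h3 -h2 h4; ring.
by rewrite -hs mulKn.
Qed.

Definition mm (p : I * I) : I * I := if (p.1 <= p.2)%N then p else (p.2, p.1).

Lemma mm_E A p : (mm p \in EA' A) = (p \in EA A).
Proof.
case: p => x y; rewrite /mm /=; case: ifP => h; rewrite !inE /= ?h ?andbT //.
have hy : (y < x)%N by rewrite ltnNge h.
rewrite (ltnW hy) andbT.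
by case: (x \notin A); case: (y \notin A).
Qed.

Lemma mm_id A p : p \in EA' A -> mm p = p.
Proof. by rewrite /mm inE => /andP[_ ->]. Qed.

Lemma mm_sw x y : mm (x, y) = mm (y, x).
Proof.
rewrite /mm /=; case: (ltngtP x y) => // h.
by have -> : x = y by apply: val_inj.
Qed.

Lemma comm_count (A : {set I}) (z : I) :
  #|[set f : table n | [&& famP z (EA A) A f, A :\ z \subset f @: EA A & is_comm f]]|
  = Ncov z (EA' A) A (A :\ z).
Proof.
pose phi (g : table n) : table n := [ffun p => g (mm p)].
set S' := [set g : table n | famP z (EA' A) A g && (A :\ z \subset g @: EA' A)].
have -> : [set f : table n | [&& famP z (EA A) A f, A :\ z \subset f @: EA A & is_comm f]]
   = phi @: S'.
  apply/setP => f; rewrite inE; apply/idP/imsetP.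
  - case/and3P => /forallP fam cov /forallP com.
    exists [ffun p => if p \in EA' A then f p else z].
      rewrite inE; apply/andP; split.
        apply/forallP => p; rewrite ffunE; case: ifP => pE'; rewrite ?pE' //.
        have pE : p \in EA A by rewrite -mm_E (@mm_id A).
        by move: (fam p); rewrite pE.
      apply/subsetP => c /(subsetP cov) /imsetP [e eE ->].
      apply/imsetP; exists (mm e); first by rewrite mm_E.
      rewrite ffunE mm_E eE; case: e eE => x y _ /=; rewrite /mm /=.
      by case: ifP => //; move/forallP: (com x) => /(_ y) /eqP.
    apply/ffunP => p; rewrite !ffunE mm_E; case: ifP => pE.
      case: p pE => x y _; rewrite /mm /=; case: ifP => //.
      by move/forallP: (com x) => /(_ y) /eqP.
    by move: (fam p); rewrite pE => /eqP.
  - case=> g; rewrite inE => /andP[/forallP fam cov] ->.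
    apply/and3P; split.
    + apply/forallP => p; rewrite ffunE; move: (fam (mm p)); rewrite mm_E.
      by case: ifP.
    + apply/subsetP => c /(subsetP cov) /imsetP [e eE ->].
      apply/imsetP; exists e; last by rewrite ffunE (@mm_id A).
      by rewrite -mm_E (@mm_id A).
    + apply/forallP => x; apply/forallP => y; by rewrite !ffunE mm_sw.
rewrite card_in_imset // => g1 g2; rewrite !inE => /andP[/forallP f1 _] /andP[/forallP f2 _] e12.
apply/ffunP => p; case pE: (p \in EA' A).
  by have := congr1 (fun h : table n => h p) e12; rewrite !ffunE (@mm_id A).
by move: (f1 p) (f2 p); rewrite pE => /eqP -> /eqP ->.
Qed.

Lemma count1 (A : {set I}) (z : I) :
  Posz #|[set f in [set f : table n | nil_degree f 3] | (Spow f 2 == A) && (Spow f 3 == [set z])]|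
  = if (z \in A) && (1 < #|A|) then Tsum (fun m => ((n - m) ^ 2)%N) #|A| else 0%R.
Proof.
have -> : [set f in [set f : table n | nil_degree f 3] | (Spow f 2 == A) && (Spow f 3 == [set z])]
  = [set f | [&& z \in A, 1 < #|A|, famP z (EA A) A f & A :\ z \subset f @: EA A]].
  by apply/setP => f; rewrite !inE char3.
case h: ((z \in A) && (1 < #|A|)); last first.
  rewrite (_ : [set f | _] = set0) ?cards0 //; apply/setP => f.
  by rewrite !inE andbA h.
case/andP: h => zA A1.
have -> : [set f | [&& z \in A, 1 < #|A|, famP z (EA A) A f & A :\ z \subset f @: EA A]]
  = [set f | famP z (EA A) A f && (A :\ z \subset f @: EA A)].
  by apply/setP => f; rewrite !inE zA A1.
have hk : #|A :\ z| = #|A|.-1 by rewrite [#|A|](cardsD1 z) zA.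
rewrite -/(Ncov z (EA A) A (A :\ z)) (Ncov_formula z _ hk (subD1set _ _)).
by rewrite Tsum_Ssum ?card_EA // (leq_trans _ A1).
Qed.

Lemma count2 (A : {set I}) (z : I) :
  Posz #|[set f in [set f : table n | is_comm f && nil_degree f 3] | (Spow f 2 == A) && (Spow f 3 == [set z])]|
  = if (z \in A) && (1 < #|A|) then Tsum (fun m => ((n - m) * (n - m + 1) %/ 2)%N) #|A| else 0%R.
Proof.
have -> : [set f in [set f : table n | is_comm f && nil_degree f 3] | (Spow f 2 == A) && (Spow f 3 == [set z])]
  = [set f | is_comm f && [&& z \in A, 1 < #|A|, famP z (EA A) A f & A :\ z \subset f @: EA A]].
  by apply/setP => f; rewrite !inE -andbA char3.
case h: ((z \in A) && (1 < #|A|)); last first.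
  rewrite (_ : [set f | _] = set0) ?cards0 //; apply/setP => f.
  by rewrite !inE; move: h; case: (z \in A); case: (1 < #|A|)%N => //= _; rewrite andbF.
case/andP: h => zA A1.
have -> : [set f | is_comm f && [&& z \in A, 1 < #|A|, famP z (EA A) A f & A :\ z \subset f @: EA A]]
  = [set f : table n | [&& famP z (EA A) A f, A :\ z \subset f @: EA A & is_comm f]].
  by apply/setP => f; rewrite !inE zA A1 /= andbC andbA.
have hk : #|A :\ z| = #|A|.-1 by rewrite [#|A|](cardsD1 z) zA.
rewrite comm_count (Ncov_formula z _ hk (subD1set _ _)).
by rewrite Tsum_Ssum ?card_EA' // (leq_trans _ A1).
Qed.

Lemma nil3_S3 (f : table n) : nil_degree f 3 -> #|Spow f 3| = 1%N.
Proof. by case/and4P => _ _ /eqP. Qed.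

Lemma part1 : Posz #|[set f : table n | nil_degree f 3]| =
  (\sum_(2 <= m < n.+1) Posz ('C(n, m) * m) * Tsum (fun m => ((n - m) ^ 2)%N) m)%R.
Proof.
apply: assemble; last exact: count1.
by move=> f; rewrite inE; apply: nil3_S3.
Qed.

Lemma part2 : Posz #|[set f : table n | is_comm f && nil_degree f 3]| =
  (\sum_(2 <= m < n.+1) Posz ('C(n, m) * m) * Tsum (fun m => ((n - m) * (n - m + 1) %/ 2)%N) m)%R.
Proof.
apply: assemble; last exact: count2.
by move=> f; rewrite inE => /andP[_]; apply: nil3_S3.
Qed.
End Main.

Lemma range_change (W : nat -> int) p q :
  (forall m, (1 < m)%N -> (minn p q <= m)%N -> (m < maxn p q)%N -> W m = 0%R) ->
  (\sum_(2 <= m < p) W m = \sum_(2 <= m < q) W m)%R.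
Proof.
wlog pq : p q / (p <= q)%N.
  move=> Hw H; case: (leqP p q) => h; first exact: Hw.
  by symmetry; apply: Hw; [exact: ltnW | by move=> m; rewrite minnC maxnC; apply: H].
move=> H; have mn : minn p q = p by apply/minn_idPl.
have mx : maxn p q = q by apply/maxn_idPr.
case: (leqP 2 p) => h2.
  rewrite [RHS](big_cat_nat _ (n := p)) //= [X in _ = (_ + X)%R]big1_seq ?addr0 //.
  move=> m; rewrite mem_index_iota => /andP[pm mq]; apply: H; rewrite ?mn ?mx; lia.
rewrite big_geq ?(ltnW h2) //; symmetry; apply: big1_seq => m.
rewrite mem_index_iota => /andP[m2 mq]; apply: H; rewrite ?mn ?mx; lia.
Qed.

Local Open Scope ring_scope.

Theorem theorem2p1 (n : nat) :
  (#|[set f : table n | nil_degree f 3]|%:Z =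
     \sum_(2 <= m < (a_bound n).+1)
        ('C(n, m) * m)%:Z *
        \sum_(0 <= i < m)
           (-1) ^+ i * ('C(m.-1, i))%:Z * (((m - i) ^ ((n - m) ^ 2))%N)%:Z)
  /\
  (#|[set f : table n | is_comm f && nil_degree f 3]|%:Z =
     \sum_(2 <= m < (c_bound n).+1)
        ('C(n, m) * m)%:Z *
        \sum_(0 <= i < m)
           (-1) ^+ i * ('C(m.-1, i))%:Z
             * (((m - i) ^ ((n - m) * (n - m + 1) %/ 2))%N)%:Z).
Proof.
split.
- rewrite part1 (range_change _ (q := (a_bound n).+1)) //.
  move=> m m1 hmin hmax.
  case: (leqP m n) => mn; last by rewrite bin_small // mul0n mul0r.
  rewrite Tsum_zero ?mulr0 //; rewrite ltnNge; apply/negP => h.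
  have := a_ge mn h; move: hmin hmax mn; lia.
- rewrite part2 (range_change _ (q := (c_bound n).+1)) //.
  move=> m m1 hmin hmax.
  case: (leqP m n) => mn; last by rewrite bin_small // mul0n mul0r.
  rewrite Tsum_zero ?mulr0 //; rewrite ltnNge; apply/negP => h.
  have := c_ge mn h; move: hmin hmax mn; lia.
Qed.
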